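(* Let $A(0)=1$ and $A(n)=nA(n-1)+1$ for $n\ge1$ (so $A(n)=\sum_{r=0}^n n!/r!$). For every integer $M>0$, the sequence $(A(n)\bmod M)_{n\ge0}$ is periodic with period exactly $M$. *)

(* Defs.v *)
From mathcomp Require Import all_boot.

Fixpoint A (n : nat) : nat :=
  match n with
  | 0 => 1
  | k.+1 => k.+1 * A k + 1
  end.

Definition is_period_mod (M p : nat) : Prop :=
  forall n, A (n + p) = A n %[mod M].

(* Main.v *)
Require Import Defs.
From mathcomp Require Import all_boot.

Lemma A_S n : A n.+1 = n.+1 * A n + 1.
Proof. by []. Qed.

Theorem propositionA5 (M : nat) (hM : 0 < M) :
  is_period_mod M M /\ (forall p, 0 < p -> is_period_mod M p -> M <= p).
Proof.
split.
- move=> n; elim: n => [|j IH].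
  + rewrite add0n; case: M hM => // m _.
    by rewrite A_S -modnDml modnMr add0n.
  + rewrite addSn !A_S.
    have -> : (j + M).+1 = j.+1 + M by rewrite addSn.
    have e : (j.+1 + M) * A (j + M) = j.+1 * A j %[mod M].
      by rewrite mulnC -modnMml IH modnMml mulnC -modnMml modnDr modnMml.
    by rewrite -modnDml e modnDml.
- move=> p hp hper.
  have h0 := hper 0. rewrite add0n /= in h0.
  have h1 := hper 1. rewrite add1n A_S /= in h1.
  have : p.+1 + 1 = 2 %[mod M].
    have e : p.+1 * A p = p.+1 %[mod M] by rewrite -modnMmr h0 modnMmr muln1.
    by rewrite -h1 -[in RHS]modnDml e modnDml.
  have -> : p.+1 + 1 = p + 2 by rewrite addn1 addn2.
  move/eqP; rewrite -{2}[2]add0n eqn_modDr mod0n => /eqP hm.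
  apply: dvdn_leq => //. by apply/dvdnP; exists (p %/ M); rewrite {1}(divn_eq p M) hm addn0.
Qed.
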